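(* Let $n\ge1$, let $\alpha=(\alpha_1,\dots,\alpha_\ell)$ be a composition of $n$, and let $V_\alpha=\{\gamma\vDash n : S_\alpha\in U_\gamma\}$ be the set of compositions $\gamma$ of $n$ for which $S_\alpha$ is $\gamma$-unimodal. Then $$|V_\alpha| = 2^{n-1}\left(\tfrac34\right)^m,$$ where $m$ is the number of indices $i\in[\ell-1]$ with $\alpha_i>1$.
   Context: A composition $\alpha=(\alpha_1,\dots,\alpha_\ell)$ of $n$ (written $\alpha\vDash n$) is a sequence of positive integers summing to $n$; $\ell=\ell(\alpha)$ is its number of parts. Set $S_\alpha=\{\alpha_1,\alpha_1+\alpha_2,\dots,\alpha_1+\dots+\alpha_{\ell-1}\}\subseteq[n-1]$. The blocks of $\alpha$ are $B_i(\alpha)=\{\alpha_1+\dots+\alpha_{i-1}+1,\dots,\alpha_1+\dots+\alpha_i\}$ for $i\in[\ell]$. A set $S\subseteq[n-1]$ is $\gamma$-unimodal (for a composition $\gamma$ of $n$) if for every block $B_i(\gamma)$ the set $S\cap(B_i(\gamma)\setminus S_\gamma)$ is an initial segment (in increasing order) of $B_i(\gamma)\setminus S_\gamma$; equivalently, $S$ is the descent set of a permutation whose restriction to each block of $\gamma$ is a word $\sigma_a>\dots>\sigma_k<\dots<\sigma_b$. $U_\gamma$ denotes the set of $\gamma$-unimodal subsets of $[n-1]$. *)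

(* Defs.v *)
From mathcomp Require Import all_boot.
Set Implicit Arguments. Unset Strict Implicit. Unset Printing Implicit Defensive.

Definition is_composition (n : nat) (g : seq nat) : bool :=
  all (fun x => 0 < x) g && (sumn g == n).

Definition Sset (g : seq nat) : seq nat :=
  [seq sumn (take i g) | i <- iota 1 (size g).-1].

(* block i (0-indexed, i < size g) = B_{i+1}(g)
   = { g_1+...+g_i + 1, ..., g_1+...+g_{i+1} }, in increasing order *)
Definition block (g : seq nat) (i : nat) : seq nat :=
  iota (sumn (take i g)).+1 (nth 0 g i).

Definition unimodal (g : seq nat) (S : seq nat) : bool :=
  all (fun i =>
         let L := [seq x <- block g i | x \notin Sset g] in
         prefix [seq x <- L | x \in S] L)
      (iota 0 (size g)).

Definition inV (n : nat) (a g : seq nat) : bool :=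
  is_composition n g && unimodal g (Sset a).

Definition m_count (a : seq nat) : nat :=
  count (fun x => 1 < x) (take (size a).-1 a).

(* Main.v *)
Require Import Defs.
From mathcomp Require Import all_boot zify.
Set Implicit Arguments. Unset Strict Implicit. Unset Printing Implicit Defensive.


Lemma iotaS1 m k : iota m.+1 k = map succn (iota m k).
Proof. by elim: k m => //= k IH m; rewrite IH. Qed.

Lemma Sset0 x g : Sset (x :: g) = [seq x + sumn (take i g) | i <- iota 0 (size g)].
Proof.
rewrite /Sset /= iotaS1 -map_comp; apply: eq_map => i /=.
by [].
Qed.

Lemma Sset_succ x g : Sset (x.+1 :: g) = map succn (Sset (x :: g)).
Proof. by rewrite !Sset0 -map_comp; apply: eq_map => i /=; rewrite addSn. Qed.

Lemma Sset_cons x y g : Sset (x :: y :: g) = x :: map (addn x) (Sset (y :: g)).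
Proof.
rewrite Sset0 Sset0 /= addn0 iotaS1 -!map_comp; by [].
Qed.

Lemma Sset_ge y h z : z \in Sset (y :: h) -> y <= z.
Proof. by rewrite Sset0 => /mapP [i _ ->]; rewrite leq_addr. Qed.

Fixpoint comp_of (t : bitseq) : seq nat :=
  match t with
  | [::] => [:: 1]
  | true :: r => 1 :: comp_of r
  | false :: r => match comp_of r with
                  | [::] => [::]
                  | x :: g => x.+1 :: g end
  end.

Fixpoint bits_of (g : seq nat) : bitseq :=
  match g with
  | [::] => [::]
  | [:: x] => nseq x.-1 false
  | x :: g' => nseq x.-1 false ++ true :: bits_of g'
  end.

Lemma comp_of_ne t : exists x g, comp_of t = x :: g.
Proof.
elim: t => [|[] r [x [g IH]]] /=; first by exists 1, [::].
  by exists 1, (comp_of r).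
by rewrite IH; exists x.+1, g.
Qed.

Lemma comp_of_pos t : all (fun x => 0 < x) (comp_of t).
Proof.
elim: t => [|[] r IH] //=.
by case: (comp_of r) IH => //= x g /andP[_ ->].
Qed.

Lemma comp_of_sum t : sumn (comp_of t) = (size t).+1.
Proof.
elim: t => [|[] r IH] //=; first by rewrite IH.
by case: (comp_of r) IH => //= x g <-.
Qed.

Lemma comp_ofK : cancel comp_of bits_of.
Proof.
elim=> [|[] r IH] //=.
  case: (comp_of_ne r) IH => x [g E]; rewrite E => IH.
  by rewrite -IH.
have := comp_of_pos r.
case: (comp_of_ne r) IH => x [g E]; rewrite E => IH /andP [].
case: x E IH => // x _ IH _ _; rewrite -IH.
by case: g {IH}.
Qed.

Lemma nseq_comp k r : comp_of (nseq k false ++ r) =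
  match comp_of r with [::] => [::] | x :: g => (x + k) :: g end.
Proof.
elim: k => [|k IH] /=; first by case: (comp_of r) => // x g; rewrite addn0.
by rewrite IH; case: (comp_of r) => // x g; rewrite addnS.
Qed.

Lemma bits_ofK g : g != [::] -> all (fun x => 0 < x) g -> comp_of (bits_of g) = g.
Proof.
elim: g => [|x [|y g] IH] // _ /= /andP [x0 H].
  by rewrite -(cats0 (nseq _ _)) nseq_comp /= add1n prednK.
rewrite nseq_comp /= IH //= add1n prednK //.
Qed.

Lemma mem_Sset_comp t j : (j \in Sset (comp_of t)) = (0 < j) && nth false t j.-1.
Proof.
elim: t j => [|[] r IH] j /=.
- by rewrite nth_nil andbF.
- case: (comp_of_ne r) => x [g E].
  rewrite E Sset_cons -E inE; case: j => [|[|j]] //=.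
    by apply/mapP => [[i]].
  have -> : j.+2 = 1 + j.+1 by [].
  by rewrite mem_map ?IH //; apply: addnI.
- case: (comp_of_ne r) IH => x [g E]; rewrite E => IH.
  rewrite Sset_succ; case: j => [|j] /=.
    by apply/mapP => [[i]].
  rewrite (mem_map succn_inj) IH; case: j => //.
Qed.

Definition Cj (S : seq nat) j := (j \in S) || (j.+1 \notin S).

Lemma all_Cj_has (S : seq nat) v k : v \notin S ->
  all (Cj S) (iota v k) = ~~ has (mem S) (iota v.+1 k).
Proof.
elim: k v => [|k IH] v vS //=.
rewrite /Cj (negbTE vS) /=.
case: (boolP (v.+1 \in S)) => //= H; exact: IH.
Qed.

Lemma prefix_iota (S : seq nat) u k :
  prefix [seq x <- iota u k | x \in S] (iota u k) = all (Cj S) (iota u k.-1).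
Proof.
elim: k u => [|k IH] u //=.
case: (boolP (u \in S)) => uS.
  rewrite eqxx /= IH; case: k {IH} => //= k.
  by rewrite /Cj uS.
have -> : all (Cj S) (iota u k) = ~~ has (mem S) (iota u.+1 k) by exact: all_Cj_has.
rewrite has_filter negbK.
case E: [seq x <- iota u.+1 k | x \in S] => [|y f] //=.
have : y \in [seq x <- iota u.+1 k | x \in S] by rewrite E inE eqxx.
rewrite mem_filter mem_iota => /andP [_ /andP [Hy _]].
suff -> : (y == u) = false by [].
by apply/negbTE; rewrite neq_ltn Hy orbT.
Qed.

Lemma prefix_map_inj (f : nat -> nat) : injective f ->
  forall s1 s2, prefix (map f s1) (map f s2) = prefix s1 s2.
Proof.
move=> fi s1 s2; elim: s2 s1 => [|y s2 IH] [|x s1] //=.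
by rewrite (inj_eq fi) IH.
Qed.

Definition UC (T S : seq nat) j :=
  (j \in T) || (j.+1 \in T) || (j \in S) || (j.+1 \notin S).

Lemma memS' (S : seq nat) x z : 0 < z ->
  (z \in map (subn^~ x) S) = (x + z \in S).
Proof.
move=> z0; apply/mapP/idP => [[w wS E]|H].
  by rewrite E subnKC // ltnW // -subn_gt0 -E.
by exists (x + z) => //; rewrite addKn.
Qed.

Lemma memT' x y h z : 0 < y -> 0 < z ->
  (x + z \in Sset (x :: y :: h)) = (z \in Sset (y :: h)).
Proof.
move=> y0 z0; rewrite Sset_cons inE mem_map; last exact: addnI.
by rewrite -{2}(addn0 x) eqn_add2l; case: z z0.
Qed.

Lemma memTle x y h z : 0 < y -> z <= x ->
  (z \in Sset (x :: y :: h)) = (z == x).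
Proof.
move=> y0 zx; rewrite Sset_cons inE; case: eqP => //= _.
apply/mapP => [[w /Sset_ge wy E]].
by move: zx; rewrite E -{2}(addn0 x) leq_add2l leqn0 => /eqP w0; move: wy; rewrite w0 leqn0 => /eqP y00; move: y0; rewrite y00.
Qed.

Lemma blockS x h i : block (x :: h) i.+1 = map (addn x) (block h i).
Proof. by rewrite /block /= -iotaDl addnS. Qed.

Lemma mem_block h i z : z \in block h i -> 0 < z.
Proof. by rewrite /block mem_iota => /andP [H _]; apply: leq_trans H. Qed.

Definition blk_ok (g S : seq nat) i :=
  let L := [seq x <- block g i | x \notin Sset g] in prefix [seq x <- L | x \in S] L.

Lemma unimodalE g S : unimodal g S = all (blk_ok g S) (iota 0 (size g)).
Proof. by []. Qed.

Lemma blk_okS x y h S i : 0 < y ->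
  blk_ok (x :: y :: h) S i.+1 = blk_ok (y :: h) (map (subn^~ x) S) i.
Proof.
move=> y0; rewrite /blk_ok blockS filter_map.
rewrite (@eq_in_filter _ _ (fun z => z \notin Sset (y :: h)) (block (y :: h) i)); last first.
  by move=> z zb; have z0 := mem_block zb; rewrite /= memT'.
rewrite filter_map (@eq_in_filter _ _ (fun z => z \in map (subn^~ x) S) [seq z <- block (y :: h) i | z \notin Sset (y :: h)]); last first.
  move=> z; rewrite mem_filter => /andP [_ zb]; have z0 := mem_block zb.
  by rewrite memS'.
by rewrite prefix_map_inj //; apply: addnI.
Qed.

Lemma allC (T : Type) (p : pred T) a l : all p (a :: l) = p a && all p l.
Proof. by []. Qed.

Lemma U g : g != [::] -> all (fun x => 0 < x) g -> forall S,
  unimodal g S = all (UC (Sset g) S) (iota 1 (sumn g).-1).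
Proof.
elim: g => [|x h IH] // _; case: h IH => [|y h] IH /=.
  rewrite andbT => x0 S.
  rewrite /unimodal /= andbT addn0.
  have -> : [seq _ <- block [:: x] 0 | true] = iota 1 x.
    by rewrite /block /=; elim: (iota 1 x) => //= ? ? ->.
  rewrite prefix_iota.
  by apply: eq_all => j; rewrite /UC /Sset /=.
move=> /andP [x0 /andP [y0 hpos]] S.
set S' := map (subn^~ x) S.
have IH' := IH isT (introT andP (conj y0 hpos)) S'.
have E : iota 0 (size [:: x, y & h]) = 0 :: map succn (iota 0 (size (y::h))).
  by rewrite /= iotaS1.
rewrite unimodalE E allC all_map.
have -> : all (preim succn (blk_ok [:: x, y & h] S)) (iota 0 (size (y :: h)))
   = unimodal (y :: h) S'.
  by rewrite unimodalE; apply: eq_all => i /=; rewrite blk_okS.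
rewrite {}IH'.
have sh0 : 0 < sumn (y :: h) by rewrite /= ltn_addr.
set N := (sumn (y :: h)).-1.
have -> : (x + (y + sumn h)).-1 = x + N.
  have -> : y + sumn h = N.+1 by rewrite /N prednK.
  by rewrite addnS.
have -> : iota 1 (x + N) = iota 1 x ++ map (addn x) (iota 1 N).
  by rewrite iotaD (addnC 1) iotaDl.
rewrite all_cat all_map.
congr (_ && _); last first.
  apply: eq_in_all => j; rewrite mem_iota => /andP [j0 _] /=.
  rewrite /UC -addnS !memT' ?memS' //.
rewrite /blk_ok.
have -> : block [:: x, y & h] 0 = iota 1 x by [].
case: x x0 {S' E} => // x' _.
have -> : iota 1 x'.+1 = iota 1 x' ++ [:: x'.+1].
  by rewrite -[in LHS](addn1 x') iotaD add1n.
rewrite filter_cat /= memTle // eqxx /= cats0.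
rewrite (@eq_in_filter _ _ predT (iota 1 x')); last first.
  move=> z; rewrite mem_iota => /andP [_ zx] /=.
  rewrite memTle //; last by rewrite -ltnS ltnW.
  by move: zx; rewrite add1n neq_ltn => ->.
rewrite filter_predT prefix_iota all_cat /= andbT.
have -> : UC (Sset [:: x'.+1, y & h]) S x'.+1.
  by rewrite /UC memTle // eqxx.
rewrite andbT; case: x' => // k.
have -> : iota 1 k.+1 = iota 1 k ++ [:: k.+1] by rewrite -[in LHS](addn1 k) iotaD add1n.
rewrite all_cat /= {2}/UC memTle // eqxx orbT /= andbT.
apply: eq_in_all => j; rewrite mem_iota add1n => /andP [_ jk].
rewrite /UC /Cj !memTle //; last by apply: leq_trans (ltnW jk) _.
  by rewrite !ltn_eqF // ltnS ltnW.
by rewrite ltnW // ltnW.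
Qed.

Definition good (sb t : bitseq) :=
  all (fun k => nth false t k || nth false t k.+1 || nth false sb k
                || ~~ nth false sb k.+1) (iota 0 (size sb)).

Lemma good_nil t : good [::] t.
Proof. by []. Qed.

Lemma good_cons s0 sr t0 tr : good (s0 :: sr) (t0 :: tr) =
  (t0 || nth false tr 0 || s0 || ~~ nth false sr 0) && good sr tr.
Proof. by rewrite /good /= iotaS1 all_map. Qed.

Fixpoint all_bits k : seq bitseq :=
  if k is k'.+1 then map (cons false) (all_bits k') ++ map (cons true) (all_bits k')
  else [:: [::]].


Lemma mem_all_bits k t : (t \in all_bits k) = (size t == k).
Proof.
elim: k t => [|k IH] [|b t] //=.
  by rewrite mem_cat; apply/orP => [[]] /mapP [].
have ci : forall c : bool, injective (@cons bool c) by move=> c x y [].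
rewrite mem_cat eqSS -IH; case: b.
  rewrite (mem_map (ci _)); case: (t \in _); rewrite ?orbT //= orbF.
  by apply/negP => /mapP [].
rewrite (mem_map (ci _)); case: (t \in _) => //=.
by apply/negP => /mapP [].
Qed.

Lemma uniq_all_bits k : uniq (all_bits k).
Proof.
have ci : forall c : bool, injective (@cons bool c) by move=> c x y [].
elim: k => //= k IH; rewrite cat_uniq !(map_inj_uniq (ci _)) IH andbT /=.
by apply/hasP => [[t /mapP [u _ ->] /mapP [v _]]].
Qed.

Lemma count_all_bits (p : pred bitseq) k : count p (all_bits k.+1) =
  count (fun t => p (false :: t)) (all_bits k) + count (fun t => p (true :: t)) (all_bits k).
Proof. by rewrite /= count_cat !count_map. Qed.

Fixpoint pc (s : bitseq) : nat :=
  match s with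
  | false :: (true :: r) => (pc r).+1
  | _ :: r => pc r
  | [::] => 0
  end.

Lemma count_nopat b r : b || ~~ nth false r 0 ->
  count (good (b :: r)) (all_bits (size r).+1) = 2 * count (good r) (all_bits (size r)).
Proof.
move=> H; rewrite count_all_bits.
have E : forall c, (fun t => good (b :: r) (c :: t)) =1 good r.
  by move=> c t; rewrite good_cons; case: b H; case: (nth false r 0); rewrite ?orbT.
by rewrite !(eq_count (E _)) mul2n addnn.
Qed.

Lemma count_pat r :
  count (good [:: false, true & r]) (all_bits (size r).+2) = 3 * count (good r) (all_bits (size r)).
Proof.
rewrite !count_all_bits.
have E : forall c d, (fun t => good [:: false, true & r] [:: c, d & t]) =1
   (fun t => (c || d) && good r t).
  by move=> c d t; rewrite !good_cons /= !orbT orbF /=; case: c; case: d.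
rewrite !(eq_count (E _ _)) /=.
rewrite (eq_count (a2 := pred0)) // count_pred0.
by rewrite !(eq_count (a2 := good r)) // add0n !mulSn mul0n addn0 addnA.
Qed.

Lemma count_good_ind m sb : size sb <= m ->
  count (good sb) (all_bits (size sb)) * 4 ^ pc sb = 2 ^ size sb * 3 ^ pc sb.
Proof.
elim: m sb => [|m IH]; first by case.
case=> [|b r] Hs; first by [].
have Hr : size r <= m by [].
have nopat : b || ~~ nth false r 0 -> pc (b :: r) = pc r.
  by clear Hs; case: b => //; case: r {Hr} => [|[] r].
case: (boolP (b || ~~ nth false r 0)) => Hb.
  rewrite [size _]/= count_nopat // nopat // -mulnA IH //.
  by rewrite expnS mulnA.
have [-> [r' Er]] : b = false /\ exists r', r = true :: r'.
  by clear Hs nopat; case: b Hb => //; case: r {Hr} => [|[] r] //= _; split => //; exists r.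
subst r; have Hr' : size r' <= m by apply: ltnW.
have -> : pc [:: false, true & r'] = (pc r').+1 by [].
rewrite [size _]/= count_pat.
have := IH r' Hr'; rewrite !expnS; nia.
Qed.

Lemma pc_nseq0 k : pc (nseq k false) = 0.
Proof. by elim: k => // [[|k]] //. Qed.

Lemma pc_nseq k r : pc (nseq k.+1 false ++ true :: r) = (pc r).+1.
Proof. by elim: k => // k. Qed.

Lemma pc_bits a : pc (bits_of a) = m_count a.
Proof.
elim: a => [|x [|y g] IH] //.
  by rewrite /= pc_nseq0.
have -> : m_count [:: x, y & g] = (1 < x) + m_count (y :: g) by [].
rewrite -IH /=.
by case: x => [|[|x]] //; rewrite pc_nseq.
Qed.

Lemma link t sb : size t = size sb ->
  all (UC (Sset (comp_of t)) (Sset (comp_of sb))) (iota 1 (size sb)) = good sb t.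
Proof.
move=> _; rewrite /good iotaS1 all_map; apply: eq_all => j /=.
by rewrite /UC !mem_Sset_comp.
Qed.

Unset Implicit Arguments.
Set Strict Implicit.

Theorem proposition2p1 (n : nat) (a : seq nat) :
  1 <= n -> is_composition n a ->
  exists s : seq (seq nat),
    [/\ uniq s, (forall g, (g \in s) = inV n a g) &
        size s * 4 ^ m_count a = 2 ^ n.-1 * 3 ^ m_count a].
Proof.
move=> n1 /andP [apos /eqP sa].
have ane : a != [::] by apply/eqP => a0; move: sa n1; rewrite a0 /= => <-.
set sb := bits_of a.
have aE : comp_of sb = a by apply: bits_ofK.
have ssb : size sb = n.-1 by rewrite -sa -aE comp_of_sum.
exists (map comp_of (filter (good sb) (all_bits n.-1))); split.
- rewrite (map_inj_uniq (can_inj comp_ofK)); apply: filter_uniq; exact: uniq_all_bits.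
- move=> g; apply/mapP/idP.
  + move=> [t]; rewrite mem_filter mem_all_bits => /andP [gt /eqP st] ->.
    have tne : comp_of t != [::] by case: (comp_of_ne t) => x [h ->].
    rewrite /inV /is_composition comp_of_pos comp_of_sum st prednK //= eqxx /=.
    rewrite U ?comp_of_pos // comp_of_sum /= st -ssb -aE link //.
    by rewrite st ssb.
  + rewrite /inV /is_composition => /andP [/andP [gpos /eqP gs] gu].
    have gne : g != [::] by apply/eqP => g0; move: gs n1; rewrite g0 /= => <-.
    have gE := bits_ofK gne gpos.
    have sg : size (bits_of g) = n.-1 by rewrite -gs -[in RHS]gE comp_of_sum.
    exists (bits_of g) => //.
    rewrite mem_filter mem_all_bits sg eqxx andbT.
    move: gu; rewrite -{1}gE U ?comp_of_pos //; last by case: (comp_of_ne (bits_of g)) => x [h ->].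
    by rewrite comp_of_sum /= sg -ssb -aE link // sg ssb.
- rewrite size_map size_filter -ssb -pc_bits.
  exact: (count_good_ind (leqnn _)).
Qed.
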